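(* Let $G=\bigoplus_{n=2}^\infty\mathbb Z/n$. There is a proper, left-invariant metric $d_G$ on $G$ such that $\operatorname{l\text{-}asdim}(G,d_G)>0=\operatorname{asdim}(G,d_G)$.
   Context: For a metric space $X$: $\operatorname{asdim}(X)\le n$ iff for every $r>0$ there are $D<\infty$ and families $\mathcal U_1,\dots,\mathcal U_{n+1}$ of subsets covering $X$, each $r$-disjoint (points in different members of the same family at distance $\ge r$), with members of diameter $\le D$. $\operatorname{l\text{-}asdim}(X)\le n$ (linearly controlled asymptotic dimension) iff there are $c>0$ and an unbounded set $U\subset\mathbb R_+$ such that for every $r\in U$ there are families $\mathcal U_1,\dots,\mathcal U_{n+1}$ covering $X$, each $r$-disjoint, with members of diameter $\le cr$. A metric is proper if bounded sets are finite (closed balls are compact). *)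

(* Defs.v *)
From Stdlib Require Import Reals Lra Lia Arith.
Open Scope R_scope.

(** The group G = ⊕_{n>=2} Z/n.  Component [k] (k : nat) is the factor
    Z/(k+2).  An element is a finitely supported sequence with
    [gval g k < k + 2]. *)
Record G : Type := mkG {
  gval : nat -> nat ;
  gbound : forall k, (gval k < k + 2)%nat ;
  gfin : exists N, forall k, (N <= k)%nat -> gval k = 0%nat }.

Lemma gadd_bound (x y : G) k :
  (((gval x k + gval y k) mod (k + 2)) < k + 2)%nat.
Proof. apply Nat.mod_upper_bound; lia. Qed.

Lemma gadd_fin (x y : G) : exists N, forall k, (N <= k)%nat ->
  ((gval x k + gval y k) mod (k + 2))%nat = 0%nat.
Proof.
  destruct (gfin x) as [N1 H1]; destruct (gfin y) as [N2 H2].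
  exists (Nat.max N1 N2); intros k Hk.
  rewrite H1, H2 by lia. simpl. apply Nat.Div0.mod_0_l.
Qed.

Definition gadd (x y : G) : G :=
  mkG (fun k => ((gval x k + gval y k) mod (k + 2))%nat)
      (gadd_bound x y) (gadd_fin x y).

Definition is_metric {X : Type} (d : X -> X -> R) : Prop :=
  (forall x y, 0 <= d x y) /\
  (forall x y, d x y = 0 <-> x = y) /\
  (forall x y, d x y = d y x) /\
  (forall x y z, d x z <= d x y + d y z).

(** Proper: bounded sets are finite; equivalently every closed ball is a
    finite set (listed by some finite list). *)
Definition proper_metric {X : Type} (d : X -> X -> R) : Prop :=
  forall (x : X) (r : R), exists l : list X,
    forall y, d x y <= r -> List.In y l.

Definition left_invariant (d : G -> G -> R) : Prop :=
  forall g x y, d (gadd g x) (gadd g y) = d x y.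

Definition r_disjoint {X : Type} (d : X -> X -> R) (r : R)
  (F : (X -> Prop) -> Prop) : Prop :=
  forall U V x y, F U -> F V -> U <> V -> U x -> V y -> r <= d x y.

Definition diam_le {X : Type} (d : X -> X -> R) (D : R)
  (F : (X -> Prop) -> Prop) : Prop :=
  forall U x y, F U -> U x -> U y -> d x y <= D.

(** The families U_1, ..., U_{n+1} are indexed by i < n+1. *)
Definition covers {X : Type} (n : nat)
  (F : nat -> (X -> Prop) -> Prop) : Prop :=
  forall x, exists i U, (i < n + 1)%nat /\ F i U /\ U x.

Definition asdim_le {X : Type} (d : X -> X -> R) (n : nat) : Prop :=
  forall r, 0 < r -> exists (D : R) (F : nat -> (X -> Prop) -> Prop),
    covers n F /\
    forall i, (i < n + 1)%nat -> r_disjoint d r (F i) /\ diam_le d D (F i).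

Definition l_asdim_le {X : Type} (d : X -> X -> R) (n : nat) : Prop :=
  exists (c : R) (Uset : R -> Prop),
    0 < c /\
    (forall r, Uset r -> 0 <= r) /\
    (forall M, exists r, Uset r /\ M < r) /\
    forall r, Uset r -> exists F : nat -> (X -> Prop) -> Prop,
      covers n F /\
      forall i, (i < n + 1)%nat -> r_disjoint d r (F i) /\ diam_le d (c * r) (F i).

(* Main.v *)
Require Import Defs.
From Stdlib Require Import Reals Lra Lia Arith List ClassicalEpsilon Classical FunctionalExtensionality PropExtensionality ProofIrrelevance ZArith.
Open Scope R_scope.

Definition cd (n a b : nat) : nat :=
  let t := if Nat.leb b a then (a - b)%nat else (b - a)%nat in Nat.min t (n - t).

Lemma cd_refl n a : cd n a a = 0%nat.
Proof. unfold cd. destruct (Nat.leb_spec a a); lia. Qed.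

Lemma cd_zero n a b : (a < n)%nat -> (b < n)%nat -> cd n a b = 0%nat -> a = b.
Proof. unfold cd. destruct (Nat.leb_spec b a); lia. Qed.

Lemma cd_sym n a b : cd n a b = cd n b a.
Proof. unfold cd. destruct (Nat.leb_spec b a); destruct (Nat.leb_spec a b); lia. Qed.

Lemma cd_tri n a b c : (a < n)%nat -> (b < n)%nat -> (c < n)%nat ->
  (cd n a c <= cd n a b + cd n b c)%nat.
Proof. unfold cd. destruct (Nat.leb_spec c a); destruct (Nat.leb_spec b a);
  destruct (Nat.leb_spec c b); lia. Qed.

Lemma cd_le n a b : (cd n a b <= n)%nat.
Proof. unfold cd. destruct (Nat.leb_spec b a); lia. Qed.

Lemma cd_pos n a b : (a < n)%nat -> (b < n)%nat -> a <> b -> (1 <= cd n a b)%nat.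
Proof. unfold cd. destruct (Nat.leb_spec b a); lia. Qed.

Lemma modsum n g a : (g < n)%nat -> (a < n)%nat ->
  ((g + a) mod n = g + a /\ g + a < n \/ (g + a) mod n = g + a - n /\ n <= g + a)%nat.
Proof.
  intros Hg Ha. destruct (Nat.lt_ge_cases (g+a) n).
  - left. rewrite Nat.mod_small; lia.
  - right. split; [|lia].
    replace (g + a)%nat with ((g + a - n) + 1 * n)%nat at 1 by lia.
    rewrite Nat.Div0.mod_add. apply Nat.mod_small. lia.
Qed.

Lemma cd_inv n g a b : (g < n)%nat -> (a < n)%nat -> (b < n)%nat ->
  cd n ((g + a) mod n) ((g + b) mod n) = cd n a b.
Proof.
  intros Hg Ha Hb.
  destruct (modsum n g a Hg Ha) as [[-> ?]|[-> ?]];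
  destruct (modsum n g b Hg Hb) as [[-> ?]|[-> ?]]; unfold cd;
  repeat match goal with |- context [Nat.leb ?x ?y] => destruct (Nat.leb_spec x y) end; lia.
Qed.

Lemma cd_one n j : (j + 1 < n)%nat -> cd n j (S j) = 1%nat.
Proof. unfold cd. destruct (Nat.leb_spec (S j) j); lia. Qed.

Lemma cd_half n m : m = (n / 2)%nat -> cd n 0 m = m.
Proof. intro H. pose proof (Nat.div_mod n 2 ltac:(lia)). pose proof (Nat.mod_upper_bound n 2 ltac:(lia)).
  subst m. unfold cd. destruct (Nat.leb_spec (n/2) 0); lia. Qed.
Lemma G_ext (x y : G) : (forall k, gval x k = gval y k) -> x = y.
Proof.
  destruct x as [fx bx nx], y as [fy byy ny]; simpl; intro H.
  assert (fx = fy) by (apply functional_extensionality; exact H). subst fy.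
  f_equal; apply proof_irrelevance.
Qed.

Fixpoint Ssum (f : nat -> R) (n : nat) : R :=
  match n with O => 0 | S n => Ssum f n + f n end.

Lemma Ssum_ext f g n : (forall k, (k < n)%nat -> f k = g k) -> Ssum f n = Ssum g n.
Proof. induction n; simpl; intros; auto. rewrite IHn, H; auto. Qed.

Lemma Ssum_le f g n : (forall k, (k < n)%nat -> f k <= g k) -> Ssum f n <= Ssum g n.
Proof. induction n; simpl; intros; [lra|]. pose proof (H n ltac:(lia)). pose proof (IHn ltac:(intros; apply H; lia)). lra. Qed.

Lemma Ssum_plus f g n : Ssum (fun k => f k + g k) n = Ssum f n + Ssum g n.
Proof. induction n; simpl; [lra|]. rewrite IHn; lra. Qed.

Lemma Ssum_nonneg f n : (forall k, 0 <= f k) -> 0 <= Ssum f n.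
Proof. induction n; simpl; intros; [lra|]. pose proof (H n). pose proof (IHn H). lra. Qed.

Lemma Ssum_ge_term f n k : (forall k, 0 <= f k) -> (k < n)%nat -> f k <= Ssum f n.
Proof.
  intros Hf; induction n; simpl; intros; [lia|].
  pose proof (Ssum_nonneg f n Hf). pose proof (Hf n).
  destruct (Nat.eq_dec k n); [subst; lra|]. pose proof (IHn ltac:(lia)). lra.
Qed.

Lemma Ssum_zero f n : (forall k, (k < n)%nat -> f k = 0) -> Ssum f n = 0.
Proof. intros. rewrite (Ssum_ext f (fun _ => 0)); auto. clear; induction n; simpl; lra. Qed.

Lemma Ssum_tail f N M : (forall k, (N <= k)%nat -> f k = 0) -> (N <= M)%nat -> Ssum f M = Ssum f N.
Proof. intros H. induction M; intros; simpl.
  - replace N with 0%nat by lia. reflexivity.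
  - destruct (Nat.eq_dec N (S M)); [subst; reflexivity|].
    rewrite IHM, H by lia. lra. Qed.

Definition supN (x : G) : nat := proj1_sig (constructive_indefinite_description _ (gfin x)).
Lemma supN_spec x k : (supN x <= k)%nat -> gval x k = 0%nat.
Proof. unfold supN. destruct (constructive_indefinite_description _ _) as [N HN]. simpl. auto. Qed.

Definition term (x y : G) (k : nat) : R := (INR k + 1) * INR (cd (k+2) (gval x k) (gval y k)).
Definition dG (x y : G) : R := Ssum (term x y) (Nat.max (supN x) (supN y)).

Lemma term_nonneg x y k : 0 <= term x y k.
Proof. unfold term. pose proof (pos_INR k). pose proof (pos_INR (cd (k+2) (gval x k) (gval y k))). nra. Qed.

Lemma term_agree x y k : gval x k = gval y k -> term x y k = 0.
Proof. intro H. unfold term. rewrite H, cd_refl. simpl. lra. Qed.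

Lemma dG_eq x y M : (forall k, (M <= k)%nat -> gval x k = gval y k) -> dG x y = Ssum (term x y) M.
Proof.
  intro H. unfold dG. set (N := Nat.max (supN x) (supN y)).
  rewrite <- (Ssum_tail (term x y) N (Nat.max M N)), <- (Ssum_tail (term x y) M (Nat.max M N)); try lia; auto.
  - intros; apply term_agree; auto.
  - intros; apply term_agree. rewrite !supN_spec; auto; lia.
Qed.

Lemma dG_ge_term x y k : term x y k <= dG x y.
Proof.
  rewrite (dG_eq x y (Nat.max (S k) (Nat.max (supN x) (supN y)))).
  - apply Ssum_ge_term; [apply term_nonneg | lia].
  - intros; rewrite !supN_spec; auto; lia.
Qed.

Lemma term_ge x y k : gval x k <> gval y k -> INR k + 1 <= term x y k.
Proof. intro H. unfold term. pose proof (cd_pos (k+2) _ _ (gbound x k) (gbound y k) H).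
  apply le_INR in H0. simpl in H0. pose proof (pos_INR k). nra. Qed.

Lemma dG_single x y k : (forall i, i <> k -> gval x i = gval y i) -> dG x y = term x y k.
Proof.
  intro H. rewrite (dG_eq x y (S k)) by (intros; apply H; lia). simpl.
  rewrite Ssum_zero; [lra|]. intros; apply term_agree, H; lia.
Qed.
Lemma dG_metric : is_metric dG.
Proof.
  split; [|split; [|split]].
  - intros; unfold dG; apply Ssum_nonneg, term_nonneg.
  - intros x y; split.
    + intro H. apply NNPP; intro Hne. apply Hne, G_ext. intro k.
      apply NNPP; intro Hk. pose proof (term_ge x y k Hk). pose proof (dG_ge_term x y k).
      pose proof (pos_INR k). lra.
    + intros ->. unfold dG. apply Ssum_zero. intros; apply term_agree; auto.
  - intros x y. unfold dG. rewrite Nat.max_comm. apply Ssum_ext. intros; unfold term; rewrite cd_sym; auto.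
  - intros x y z. set (M := Nat.max (supN x) (Nat.max (supN y) (supN z))).
    rewrite (dG_eq x z M), (dG_eq x y M), (dG_eq y z M);
      try (intros; rewrite !supN_spec; auto; unfold M in *; lia).
    rewrite <- Ssum_plus. apply Ssum_le. intros k _. unfold term.
    pose proof (cd_tri (k+2) _ _ _ (gbound x k) (gbound y k) (gbound z k)) as H.
    apply le_INR in H. rewrite plus_INR in H. pose proof (pos_INR k). nra.
Qed.

Lemma dG_inv : left_invariant dG.
Proof.
  intros g x y. set (M := Nat.max (supN g) (Nat.max (supN x) (supN y))).
  rewrite (dG_eq x y M), (dG_eq (gadd g x) (gadd g y) M);
    try (intros; simpl; rewrite !supN_spec; auto; unfold M in *; lia).
  apply Ssum_ext. intros k _. unfold term. simpl.
  rewrite cd_inv; auto; apply gbound.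
Qed.

Lemma IZR_le_INR z : IZR z <= INR (Z.to_nat z).
Proof. destruct (ZArith_dec.Z_lt_le_dec z 0).
  - apply IZR_lt in l. pose proof (pos_INR (Z.to_nat z)). lra.
  - rewrite INR_IZR_INZ, Z2Nat.id by lia. lra. Qed.

Lemma zero_bound (k : nat) : (0 < k + 2)%nat. Proof. lia. Qed.
Lemma zero_fin : exists N, forall k : nat, (N <= k)%nat -> 0%nat = 0%nat. Proof. exists 0%nat; auto. Qed.
Definition zeroG : G := mkG (fun _ => 0%nat) zero_bound zero_fin.

Lemma setG_bound (g : G) K j i : ((if Nat.eqb i K then j mod (K+2) else gval g i) < i + 2)%nat.
Proof. destruct (Nat.eqb_spec i K). subst; apply Nat.mod_upper_bound; lia. apply gbound. Qed.
Lemma setG_fin (g : G) K j : exists N, forall i, (N <= i)%nat -> (if Nat.eqb i K then j mod (K+2) else gval g i) = 0%nat.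
Proof. exists (Nat.max (supN g) (S K)). intros i Hi. destruct (Nat.eqb_spec i K); [lia|]. apply supN_spec; lia. Qed.
Definition setG (g : G) K j : G := mkG _ (setG_bound g K j) (setG_fin g K j).

Fixpoint allL (K : nat) : list G :=
  match K with
  | O => zeroG :: nil
  | S K => flat_map (fun g => map (fun j => setG g K j) (seq 0 (K+2))) (allL K)
  end.

Lemma allL_spec K y : (forall k, (K <= k)%nat -> gval y k = 0%nat) -> In y (allL K).
Proof.
  revert y; induction K; intros y Hy; simpl.
  - left. apply G_ext; intro k; simpl. rewrite Hy; auto; lia.
  - apply in_flat_map. exists (setG y K 0). split.
    + apply IHK. intros k Hk. simpl. destruct (Nat.eqb_spec k K). apply Nat.Div0.mod_0_l. apply Hy; lia.
    + apply in_map_iff. exists (gval y K). split.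
      * apply G_ext; intro i; simpl. destruct (Nat.eqb_spec i K); [subst; apply Nat.mod_small, gbound|].
        simpl; destruct (Nat.eqb_spec i K); [lia|auto].
      * apply in_seq. pose proof (gbound y K). lia.
Qed.

Lemma dG_proper : proper_metric dG.
Proof.
  intros x r. exists (allL (Nat.max (supN x) (Z.to_nat (up r)))).
  intros y Hy. apply allL_spec. intros k Hk. apply NNPP; intro Hne.
  assert (Hx : gval x k = 0%nat) by (apply supN_spec; lia).
  assert (Hn : gval x k <> gval y k) by lia.
  pose proof (term_ge x y k Hn). pose proof (dG_ge_term x y k).
  pose proof (IZR_le_INR (up r)). destruct (archimed r).
  assert (Z.to_nat (up r) <= k)%nat by lia. apply le_INR in H4. lra.
Qed.
Definition coset (K : nat) (a : G) : G -> Prop := fun z => forall k, (K <= k)%nat -> gval z k = gval a k.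

Lemma dG_asdim : asdim_le dG 0.
Proof.
  intros r Hr. set (K := Z.to_nat (up r)).
  exists (Ssum (fun k => (INR k + 1) * (INR k + 2)) K).
  exists (fun _ U => exists a : G, U = coset K a). split.
  - intro x. exists 0%nat, (coset K x). split; [lia|]. split; [exists x; auto|]. intros k _; auto.
  - intros i _. split.
    + intros U V x y [a ->] [b ->] Hne Hx Hy.
      destruct (classic (exists k, (K <= k)%nat /\ gval x k <> gval y k)) as [[k [Hk Hn]]|Hno].
      * pose proof (term_ge x y k Hn). pose proof (dG_ge_term x y k).
        pose proof (IZR_le_INR (up r)). destruct (archimed r).
        apply le_INR in Hk. fold K in H1. lra.
      * exfalso; apply Hne. apply functional_extensionality; intro z; apply propositional_extensionality.
        unfold coset in *; split; intros Hz k Hk.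
        -- rewrite <- Hy, Hz by auto. rewrite <- Hx by auto. apply NNPP; intro; apply Hno; eauto.
        -- rewrite <- Hx, Hz by auto. rewrite <- Hy by auto. apply NNPP; intro; apply Hno; eauto.
    + intros U x y [a ->] Hx Hy. rewrite (dG_eq x y K) by (intros; rewrite Hx, Hy; auto).
      apply Ssum_le; intros k _. unfold term. pose proof (cd_le (k+2) (gval x k) (gval y k)) as H.
      apply le_INR in H. rewrite plus_INR in H. simpl in H. pose proof (pos_INR k). nra.
Qed.

Definition eG k j := setG zeroG k j.

Lemma eG_dist k j j' : dG (eG k j) (eG k j') = term (eG k j) (eG k j') k.
Proof. apply dG_single. intros i Hi. simpl. destruct (Nat.eqb_spec i k); [lia|auto]. Qed.

Lemma dG_not_lasdim : ~ l_asdim_le dG 0.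
Proof.
  intros [c [Us [Hc [Hnn [Hunb HF]]]]].
  destruct (Hunb (4*c + 8)) as [r [Hr Hlt]].
  destruct (HF r Hr) as [F [Hcov HFi]].
  destruct (HFi 0%nat ltac:(lia)) as [Hdisj Hdiam].
  destruct (archimed r) as [Hup1 Hup2].
  pose proof (IZR_le_INR (up r)) as Hz.
  assert (Hz8 : (9 <= up r)%Z) by (assert (8 < up r)%Z by (apply lt_IZR; lra); lia).
  set (k := (Z.to_nat (up r) - 3)%nat).
  assert (Hk : INR k = IZR (up r) - 3).
  { unfold k. rewrite minus_INR by lia. rewrite INR_IZR_INZ, Z2Nat.id by lia. simpl. lra. }
  set (m := ((k + 2) / 2)%nat).
  assert (Hm : (2 * m + 1 >= k + 2 /\ m <= k + 1)%nat).
  { pose proof (Nat.div_mod (k+2) 2 ltac:(lia)). pose proof (Nat.mod_upper_bound (k+2) 2 ltac:(lia)). unfold m. lia. }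
  destruct (Hcov (eG k 0)) as [i [U [Hi [HU HU0]]]]. replace i with 0%nat in HU by lia.
  assert (Hchain : forall j, (j <= m)%nat -> U (eG k j)).
  { induction j; intros Hj; auto.
    destruct (Hcov (eG k (S j))) as [i' [V [Hi' [HV HV0]]]]. replace i' with 0%nat in HV by lia.
    destruct (classic (U = V)) as [->|Hne]; auto.
    pose proof (Hdisj U V _ _ HU HV Hne (IHj ltac:(lia)) HV0) as Hd.
    rewrite eG_dist in Hd. unfold term in Hd. simpl in Hd.
    rewrite Nat.eqb_refl, !Nat.mod_small in Hd by lia.
    rewrite cd_one in Hd by lia. simpl in Hd. exfalso; lra. }
  pose proof (Hdiam U _ _ HU HU0 (Hchain m ltac:(lia))) as Hd.
  rewrite eG_dist in Hd. unfold term in Hd. simpl in Hd.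
  rewrite Nat.eqb_refl, !Nat.mod_small in Hd by lia.
  rewrite cd_half in Hd by reflexivity.
  destruct Hm as [Hm1 _]. apply le_INR in Hm1. rewrite !plus_INR, mult_INR in Hm1. simpl in Hm1.
  assert (0 <= INR m) by apply pos_INR.
  nra.
Qed.

Theorem mainTheorem16 :
  exists d : G -> G -> R,
    is_metric d /\ proper_metric d /\ left_invariant d /\
    asdim_le d 0 /\ ~ l_asdim_le d 0.
Proof.
  exists dG. repeat split; auto using dG_metric, dG_proper, dG_inv, dG_asdim, dG_not_lasdim;
  apply dG_metric.
Qed.
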